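(* Let $G = N \rtimes H$ be a finite group which is Involutive Yang-Baxter (IYB), and assume that $N$ is a Hall subgroup of $G$ (i.e. $\gcd(|N|,|G:N|)=1$). Then $H$ and $N$ are IYB, and $N$ has an $H$-equivariant IYB-structure, where $H$ acts on $N$ by conjugation.
   Context: For a group $G$ and a left $\mathbb Z G$-module $M$, a $1$-cocycle is a map $\chi: G \to M$ with $\chi(gh) = \chi(g) + g\chi(h)$ for all $g,h\in G$. A finite group $G$ is called Involutive Yang-Baxter (IYB) if there is a left $\mathbb Z G$-module $M$ and a bijective $1$-cocycle $\chi: G\to M$; the pair $(M,\chi)$ is then an IYB-structure on $G$. If a group $A$ acts on $G$ from the left by automorphisms (written $g\mapsto {}^a g$), an $A$-equivariant IYB-structure on $G$ is a pair $(M,\chi)$ where $M$ is a left $\mathbb Z[G\rtimes A]$-module and $\chi: G\to M$ (with $M$ regarded as a $G$-module by restriction) is a bijective $1$-cocycle satisfying $\chi({}^a g) = a\chi(g)$ for all $a\in A$, $g\in G$. *)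

(* Defs.v *)
From HB Require Import structures.
From mathcomp Require Import all_boot all_order all_algebra all_fingroup all_solvable.
Set Implicit Arguments. Unset Strict Implicit. Unset Printing Implicit Defensive.
Import GRing.Theory.
Local Open Scope group_scope.

Definition is_module (gT : finGroupType) (K : {set gT}) (M : zmodType)
    (act : gT -> M -> M) : Prop :=
  [/\ forall m, act 1 m = m,
      {in K &, forall x y m, act (x * y) m = act x (act y m)}
    & {in K, forall x m1 m2, act x (m1 + m2)%R = (act x m1 + act x m2)%R}].

Definition is_cocycle (gT : finGroupType) (G : {set gT}) (M : zmodType)
    (act : gT -> M -> M) (chi : gT -> M) : Prop :=
  {in G &, forall g h, chi (g * h) = (chi g + act g (chi h))%R}.

Definition bijective_on (gT : finGroupType) (G : {set gT}) (M : Type)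
    (chi : gT -> M) : Prop :=
  {in G &, injective chi} /\ (forall m : M, exists2 g, g \in G & chi g = m).

Definition IYB (gT : finGroupType) (G : {set gT}) : Prop :=
  exists (M : zmodType) (act : gT -> M -> M) (chi : gT -> M),
    [/\ is_module G act, is_cocycle G act chi & bijective_on G chi].

(* H-equivariant IYB-structure on N, where H acts on N by (left) conjugation
   n |-> h n h^-1 (= n ^ h^-1 in MathComp's right-conjugation notation).
   The group N x| H (for this conjugation action, with N :&: H = 1 and H
   normalizing N) is realized internally as the product N * H inside gT. *)
Definition equivariant_IYB (gT : finGroupType) (N H : {set gT}) : Prop :=
  exists (M : zmodType) (act : gT -> M -> M) (chi : gT -> M),
    [/\ is_module (N * H) act, is_cocycle N act chi, bijective_on N chi
      & {in H & N, forall h n, chi (n ^ h^-1) = act h (chi n)}].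

(* Main.v *)
Require Import Defs.
From HB Require Import structures.
From mathcomp Require Import all_boot all_order all_algebra all_fingroup all_solvable.
Set Implicit Arguments. Unset Strict Implicit. Unset Printing Implicit Defensive.
Import GRing.Theory.

Section AnnSec.
Variables (M : zmodType) (d : nat).
Local Open Scope ring_scope.
Definition Ann := {m : M | m *+ d == 0}.
Lemma ann0 : (0 : M) *+ d == 0. Proof. by rewrite mul0rn. Qed.
Lemma annD (x y : Ann) : (val x + val y) *+ d == 0.
Proof. by rewrite mulrnDl (eqP (valP x)) (eqP (valP y)) addr0. Qed.
Lemma annN (x : Ann) : (- val x) *+ d == 0.
Proof. by rewrite mulNrn (eqP (valP x)) oppr0. Qed.
Definition ann_zero : Ann := exist (fun m : M => m *+ d == 0) 0 ann0.
Definition ann_add (x y : Ann) : Ann := exist (fun m : M => m *+ d == 0) _ (annD x y).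
Definition ann_opp (x : Ann) : Ann := exist (fun m : M => m *+ d == 0) _ (annN x).
Lemma ann_addA : associative ann_add.
Proof. by move=> x y z; apply: val_inj; rewrite /= addrA. Qed.
Lemma ann_addC : commutative ann_add.
Proof. by move=> x y; apply: val_inj; rewrite /= addrC. Qed.
Lemma ann_add0 : left_id ann_zero ann_add.
Proof. by move=> x; apply: val_inj; rewrite /= add0r. Qed.
Lemma ann_addN : left_inverse ann_zero ann_opp ann_add.
Proof. by move=> x; apply: val_inj; rewrite /= addNr. Qed.
HB.instance Definition _ := [Choice of Ann by <:].
HB.instance Definition _ := GRing.isZmodule.Build Ann ann_addA ann_addC ann_add0 ann_addN.
Lemma val_annD (x y : Ann) : val (x + y) = val x + val y. Proof. by []. Qed.
End AnnSec.

Local Open Scope ring_scope.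
Lemma is_module_sub (gT : finGroupType) (K L : {set gT}) (M : zmodType) act :
  @is_module gT L M act -> K \subset L -> is_module K act.
Proof.
move=> [h1 h2 h3] /subsetP KL; split=> //.
  by move=> x y /KL Lx /KL Ly; apply: h2.
by move=> x /KL; apply: h3.
Qed.

Lemma mulrn_mod (M : zmodType) (m : M) d i j :
  (m *+ d = 0)%R -> (i = j %[mod d])%N -> m *+ i = m *+ j.
Proof.
move=> md eij; rewrite (divn_eq i d) (divn_eq j d) eij !mulrnDr !mulrnA.
by rewrite ![m *+ _ *+ d]mulrnAC md !mul0rn.
Qed.

Lemma mulrn_dvd0 (M : zmodType) (m : M) d j :
  (m *+ d = 0)%R -> (d %| j)%N -> (m *+ j = 0)%R.
Proof. by move=> md /divnK <-; rewrite mulrnA mulrnAC md mul0rn. Qed.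

Lemma sum_const_seq (M : zmodType) (T : Type) (r : seq T) (c : M) :
  (\sum_(i <- r) c = c *+ size r)%R.
Proof. by elim: r => [|x r IH]; rewrite ?big_nil ?big_cons ?IH ?mulr0n // mulrS. Qed.

Lemma sum_shift (M : zmodType) (F : nat -> M) m :
  F m = F 0 -> (\sum_(i < m) F i.+1 = \sum_(i < m) F i)%R.
Proof.
case: m => [|m] e; first by rewrite !big_ord0.
rewrite big_ord_recr /= e [RHS]big_ord_recl /= addrC.
by congr (_ + _)%R; apply: eq_bigr => i _; rewrite lift0.
Qed.

Lemma idt (M : zmodType) (a b cc d e : M) :
  (a + b + cc - e = a + d - e + (b + cc - d))%R.
Proof.
rewrite [RHS]addrC !addrA [_ + a + d]addrAC addrNK.
by rewrite [b + cc + a]addrC addrA.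
Qed.

Section Main.
Local Open Scope group_scope.
Variables (gT : finGroupType) (G N H : {group gT}).
Hypotheses (sdG : N ><| H = G) (hallN : Hall G N).
Variables (M : zmodType) (act : gT -> M -> M) (chi : gT -> M).
Hypotheses (modG : is_module G act) (cocG : is_cocycle G act chi)
  (bijG : Defs.bijective_on G chi).

Local Open Scope group_scope.
Local Open Scope ring_scope.

Lemma act1 m : act 1 m = m. Proof. by case: modG. Qed.
Lemma actM : {in G &, forall x y m, act (x * y)%g m = act x (act y m)}.
Proof. by case: modG. Qed.
Lemma actD : {in G, forall x m1 m2, act x (m1 + m2) = act x m1 + act x m2}.
Proof. by case: modG. Qed.
Lemma act0 x : x \in G -> act x 0 = 0.
Proof.
move=> Gx; have h := actD Gx 0 0; rewrite addr0 in h.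
by apply: (addrI (act x 0)); rewrite addr0 -h.
Qed.
Lemma actN x m : x \in G -> act x (- m) = - act x m.
Proof.
by move=> Gx; apply: (addrI (act x m)); rewrite -actD // !subrr act0.
Qed.
Lemma actB x a b : x \in G -> act x (a - b) = act x a - act x b.
Proof. by move=> Gx; rewrite actD // actN. Qed.
Lemma actMn x m j : x \in G -> act x (m *+ j) = act x m *+ j.
Proof.
move=> Gx; elim: j => [|j IH]; first by rewrite !mulr0n act0.
by rewrite !mulrS actD // IH.
Qed.
Lemma act_ann x m d : x \in G -> m *+ d = 0 -> act x m *+ d = 0.
Proof. by move=> Gx md; rewrite -actMn // md act0. Qed.

Lemma chi1 : chi 1 = 0.
Proof.
have h := cocG (group1 G) (group1 G); rewrite mulg1 act1 in h.
by apply: (addrI (chi 1)); rewrite addr0 -h.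
Qed.

Lemma chi_inj : {in G &, injective chi}. Proof. by case: bijG. Qed.
Lemma chi_surj m : exists2 g, g \in G & chi g = m. Proof. by case: bijG. Qed.

Lemma affine_fix x a : x \in G -> chi x + act x a = a -> x = 1%g.
Proof.
move=> Gx h; have [y Gy ey] := chi_surj a.
have : chi (x * y)%g = chi y by rewrite cocG // ey.
move/(chi_inj (groupM Gx Gy) Gy) => e.
by apply: (mulIg y); rewrite e mul1g.
Qed.

Lemma orderG (m0 : M) : m0 *+ #|G| = 0.
Proof.
pose s := [seq chi g | g <- enum G].
have us : uniq s.
  rewrite map_inj_in_uniq ?enum_uniq // => x y xs ys; apply: chi_inj;
  by rewrite -mem_enum.
have ms : forall m, m \in s.
  by move=> m; have [g Gg <-] := chi_surj m; apply: map_f; rewrite mem_enum.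
have ut : uniq [seq x + m0 | x <- s].
  by rewrite map_inj_uniq // => x y; apply: addIr.
have p : perm_eq s [seq x + m0 | x <- s].
  apply: uniq_perm => // m; rewrite ms; symmetry.
  by rewrite -[m](subrK m0) (mem_map (@addIr _ m0)) ms.
have : \sum_(i <- s) i = \sum_(i <- [seq x + m0 | x <- s]) i by apply: perm_big.
rewrite (big_map (fun x => x + m0)) big_split /= sum_const_seq size_map -cardE => e.
by apply: (addrI (\sum_(i <- s) i)); rewrite addr0 -e.
Qed.

Lemma L x d : x \in G -> chi x *+ d = 0 -> coprime #[x] d -> x = 1%g.
Proof.
move=> Gx hd co.
pose s := \sum_(i < #[x]) chi (x ^+ i).
have key : chi x *+ #[x] + act x s = s.
  have e1 : \sum_(i < #[x]) chi (x ^+ i.+1) = s.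
    by rewrite /s (sum_shift (F := fun i => chi (x ^+ i))) //= expg_order expg0.
  rewrite -{2}e1 (eq_bigr (fun i : 'I_#[x] => chi x + act x (chi (x ^+ i)))).
    rewrite big_split /= sumr_const card_ord.
    by rewrite (big_morph (act x) (actD Gx) (act0 Gx)).
  by move=> i _; rewrite expgS cocG // groupX.
have cdm : coprime d #[x] by rewrite coprime_sym.
pose c := chinese d #[x] 1 0.
have c1 : (c = 1 %[mod d])%N by apply: chinese_modl.
have c0 : (#[x] %| c)%N by rewrite /dvdn /c chinese_modr // mod0n.
have e2 : chi x = chi x *+ c.
  by rewrite -{1}(mulr1n (chi x)); apply: (mulrn_mod hd); rewrite c1.
pose a := s *+ (c %/ #[x]).
apply: (affine_fix (a := a)) => //.
have e3 : chi x = a - act x a.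
  rewrite e2 -(divnK c0) mulnC mulrnA.
  by rewrite -(addrK (act x s) (chi x *+ #[x])) key mulrnBl actMn.
by rewrite e3 subrK.
Qed.


Definition n := #|N|.
Definition k := #|H|.
Lemma nsNG : N <| G. Proof. by case/sdprod_context: sdG. Qed.
Lemma sHG : H \subset G. Proof. by case/sdprod_context: sdG. Qed.
Lemma sNG : N \subset G. Proof. exact: normal_sub nsNG. Qed.
Lemma NHG : (N * H)%g = G. Proof. by case/sdprod_context: sdG. Qed.
Lemma tiNH : N :&: H = 1%g. Proof. by case/sdprod_context: sdG. Qed.
Lemma HNG : (H * N)%g = G. Proof. exact: sdprodWC sdG. Qed.
Lemma cardG_nk : #|G| = (n * k)%N. Proof. by rewrite -(sdprod_card sdG). Qed.
Lemma co_nk : coprime n k.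
Proof. by case/andP: hallN => _; rewrite /n /k (index_sdprod sdG). Qed.

Definition eA := chinese n k 1 0.
Definition eB := chinese n k 0 1.
Lemma eA_n : (eA = 1 %[mod n])%N. Proof. exact: chinese_modl co_nk _ _. Qed.
Lemma eB_n : (eB = 0 %[mod n])%N. Proof. exact: chinese_modl co_nk _ _. Qed.
Lemma eA_k : (eA = 0 %[mod k])%N. Proof. exact: chinese_modr co_nk _ _. Qed.
Lemma eB_k : (eB = 1 %[mod k])%N. Proof. exact: chinese_modr co_nk _ _. Qed.
Lemma k_eA : (k %| eA)%N. Proof. by rewrite /dvdn eA_k mod0n. Qed.
Lemma n_eB : (n %| eB)%N. Proof. by rewrite /dvdn eB_n mod0n. Qed.
Lemma eAB : (eA + eB = 1 %[mod n * k])%N.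
Proof.
apply/eqP; rewrite chinese_remainder ?co_nk //.
by rewrite -modnDm eA_n eB_n modnDm addn0 eqxx /= -modnDm eA_k eB_k modnDm add0n.
Qed.

Lemma ordnk (m : M) : m *+ (n * k) = 0. Proof. by rewrite -cardG_nk orderG. Qed.
Lemma decomp (m : M) : m = m *+ eA + m *+ eB.
Proof.
by rewrite -mulrnDr -{1}(mulr1n m); apply: (mulrn_mod (ordnk m)); rewrite eAB.
Qed.
Lemma annA (m : M) : m *+ eA *+ n = 0.
Proof. by rewrite -mulrnA; apply: (mulrn_dvd0 (ordnk m)); rewrite [(eA * n)%N]mulnC; apply: dvdn_mul (dvdnn n) k_eA. Qed.
Lemma annB (m : M) : m *+ eB *+ k = 0.
Proof. by rewrite -mulrnA; apply: (mulrn_dvd0 (ordnk m)); apply: dvdn_mul n_eB (dvdnn k). Qed.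
Lemma eA_on (m : M) : m *+ n = 0 -> m *+ eA = m.
Proof. by move=> h; rewrite -{2}(mulr1n m); apply: (mulrn_mod h); rewrite eA_n. Qed.
Lemma eB_on (m : M) : m *+ k = 0 -> m *+ eB = m.
Proof. by move=> h; rewrite -{2}(mulr1n m); apply: (mulrn_mod h); rewrite eB_k. Qed.
Lemma eB_off (m : M) : m *+ n = 0 -> m *+ eB = 0.
Proof. by move=> h; apply: (mulrn_dvd0 h); apply: n_eB. Qed.

Definition SA d := [set g in G | chi g *+ d == 0].
Lemma SA_group d : group_set (SA d).
Proof.
apply/group_setP; split; first by rewrite inE group1 chi1 mul0rn eqxx.
move=> x y; rewrite !inE => /andP[Gx /eqP hx] /andP[Gy /eqP hy].
by rewrite groupM // cocG // mulrnDl hx add0r -actMn // hy act0 //=.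
Qed.
Canonical SA_grp d := Group (SA_group d).

Lemma SAn_H : SA n :&: H = 1%g.
Proof.
apply/trivgP; apply/subsetP => x; rewrite !inE => /andP[/andP[Gx /eqP hx] Hx].
apply/eqP; apply: (L Gx hx).
by apply: coprime_dvdl (order_dvdG Hx) _; rewrite coprime_sym co_nk.
Qed.
Lemma SBk_N : SA k :&: N = 1%g.
Proof.
apply/trivgP; apply/subsetP => x; rewrite !inE => /andP[/andP[Gx /eqP hx] Nx].
apply/eqP; apply: (L Gx hx).
by apply: coprime_dvdl (order_dvdG Nx) _; rewrite co_nk.
Qed.
Lemma SA_sub d : SA d \subset G.
Proof. by apply/subsetP => x; rewrite inE => /andP[]. Qed.

Lemma SA_le : (#|SA n| <= n)%N.
Proof.
have := subset_leq_card (mul_subG (SA_sub n) sHG).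
rewrite (TI_cardMg SAn_H) cardG_nk leq_pmul2r //; exact: cardG_gt0.
Qed.
Lemma SB_le : (#|SA k| <= k)%N.
Proof.
have := subset_leq_card (mul_subG (SA_sub k) sNG).
rewrite (TI_cardMg SBk_N) cardG_nk [(n * k)%N]mulnC leq_pmul2r //; exact: cardG_gt0.
Qed.

Lemma G_SAB : G \subset (SA n * SA k)%g.
Proof.
apply/subsetP => g Gg.
have [x Gx ex] := chi_surj (chi g *+ eA).
have [y Gy ey] := chi_surj (act x^-1 (chi g *+ eB)).
have -> : g = (x * y)%g.
  apply: chi_inj => //; first by rewrite groupM.
  by rewrite cocG // ex ey -actM ?groupV // mulgV act1 -decomp.
apply: mem_mulg; rewrite inE ?Gx ?Gy /=.
  by rewrite ex annA.
by rewrite ey act_ann ?groupV // annB.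
Qed.

Lemma SA_card : #|SA n| = n.
Proof.
apply/eqP; rewrite eqn_leq SA_le /=.
have h1 := subset_leq_card G_SAB.
have h2 := mul_cardG (SA_grp n) (SA_grp k).
have h3 : (#|(SA n * SA k)%g| <= #|SA n| * #|SA k|)%N.
  by rewrite h2 leq_pmulr // cardG_gt0.
have h4 : (n * k <= #|SA n| * k)%N.
  rewrite -cardG_nk; apply: leq_trans h1 (leq_trans h3 _).
  by rewrite leq_mul2l SB_le orbT.
by rewrite leq_pmul2r // in h4; exact: cardG_gt0.
Qed.

Lemma SA_N : SA n = N.
Proof.
have sub : SA n \subset N.
  rewrite (sub_normal_Hall (Hall_pi hallN) nsNG (SA_sub n)).
  by rewrite /pgroup SA_card; apply: pnat_pi; apply: cardG_gt0.
by apply/eqP; rewrite eqEcard sub SA_card leqnn.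
Qed.

Lemma inN x : x \in G -> (x \in N) = (chi x *+ n == 0).
Proof. by move=> Gx; rewrite -SA_N inE Gx. Qed.

Definition annact d (x : gT) (s : Ann M d) : Ann M d := insubd s (act x (val s)).
Definition annchi d (f : gT -> M) (g : gT) : Ann M d := insubd (0 : Ann M d) (f g).

Lemma val_annact d x (s : Ann M d) : x \in G -> val (annact x s) = act x (val s).
Proof.
move=> Gx; rewrite /annact insubdK // -topredE /=.
by apply/eqP; apply: act_ann => //; apply/eqP; apply: (valP s).
Qed.
Lemma val_annchi d f g : f g *+ d = 0 -> val (annchi d f g) = f g.
Proof. by move=> h; rewrite /annchi insubdK // -topredE /= h. Qed.

Lemma annmod d : is_module G (@annact d).
Proof.
split.
- by move=> s; rewrite /annact act1 valKd.
- by move=> x y Gx Gy s; apply: val_inj; rewrite !val_annact ?groupM // actM.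
- move=> x Gx s1 s2; apply: val_inj.
  by rewrite val_annD !val_annact // val_annD actD.
Qed.

Lemma anncoc d f (K : {group gT}) : K \subset G -> is_cocycle K act f ->
  (forall g, g \in K -> f g *+ d = 0) -> is_cocycle K (@annact d) (annchi d f).
Proof.
move=> /subsetP KG cf fd x y Kx Ky; apply: val_inj.
by rewrite val_annD val_annact ?KG // !val_annchi ?fd ?groupM // cf.
Qed.

Lemma annbij d f (K : {group gT}) : (forall g, g \in K -> f g *+ d = 0) ->
  {in K &, injective f} -> (forall m, m *+ d = 0 -> exists2 g, g \in K & f g = m) ->
  Defs.bijective_on K (annchi d f).
Proof.
move=> fd finj fsurj; split.
  move=> x y Kx Ky e; apply: finj => //.
  by rewrite -(val_annchi (fd _ Kx)) -(val_annchi (fd _ Ky)) e.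
move=> s; have [g Kg eg] := fsurj (val s) (eqP (valP s)).
by exists g => //; apply: val_inj; rewrite val_annchi ?fd // eg.
Qed.

Definition chiB g := chi g *+ eB.
Lemma cocB : is_cocycle G act chiB.
Proof. by move=> x y Gx Gy; rewrite /chiB cocG // mulrnDl actMn. Qed.

Lemma injB : {in H &, injective chiB}.
Proof.
move=> h1 h2 H1 H2 e.
have HG := subsetP sHG.
pose z := (h2^-1 * h1)%g.
have Hz : z \in H by rewrite groupM ?groupV.
have e1 : chiB z = 0.
  have : chiB (h2 * z)%g = chiB h2 + act h2 (chiB z) by rewrite cocB ?HG.
  rewrite /z mulKVg e => /(congr1 (fun m => m - chiB h2)).
  rewrite addrAC subrr add0r => h.
  by rewrite -[chiB z]act1 -(mulVg h2) actM ?groupV ?HG // -h act0 ?groupV ?HG.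
have Nz : z \in N.
  rewrite inN ?HG // (decomp (chi z)).
  by rewrite /chiB in e1; rewrite e1 addr0 annA.
have : z \in N :&: H by rewrite inE Nz Hz.
rewrite tiNH inE => /eqP z1.
by rewrite -(mulKVg h2 h1) -/z z1 mulg1.
Qed.

Lemma surjB b : b *+ k = 0 -> exists2 h, h \in H & chiB h = b.
Proof.
move=> bk; have [g Gg eg] := chi_surj b.
move: Gg eg; rewrite -HNG => /mulsgP[h x Hh Nx ->] eg; exists h => //.
have Gh := subsetP sHG h Hh; have Gx := subsetP sNG x Nx.
have xn : chi x *+ n = 0 by apply/eqP; rewrite -inN.
rewrite -(eB_on bk) -eg /chiB cocG // mulrnDl -actMn // (eB_off xn).
by rewrite act0 // addr0.
Qed.

Lemma IYB_H : IYB H.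
Proof.
exists (Ann M k), (@annact k), (annchi k chiB); split.
- exact: is_module_sub (annmod k) sHG.
- apply: anncoc sHG _ _; last by move=> g _; apply: annB.
  by move=> x y Hx Hy; apply: cocB; apply: (subsetP sHG).
- apply: annbij; [by move=> g _; apply: annB | exact: injB | exact: surjB].
Qed.

Definition chiA g := chi g *+ eA.
Lemma cocA : is_cocycle G act chiA.
Proof. by move=> x y Gx Gy; rewrite /chiA cocG // mulrnDl actMn. Qed.
Definition sH := \sum_(h in H) chiA h.
Lemma sH_eq g : g \in H -> chiA g *+ k + act g sH = sH.
Proof.
move=> Hg; have Gg := subsetP sHG g Hg.
have e : sH = \sum_(h in H) chiA (g * h)%g.
  rewrite /sH (reindex_inj (mulgI g)) /=; apply: eq_bigl => h.
  by rewrite groupMl.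
rewrite [in RHS]e (eq_bigr (fun h => chiA g + act g (chiA h))); last first.
  by move=> h Hh; rewrite cocA // (subsetP sHG).
rewrite big_split /= sumr_const (big_morph (act g) (actD Gg) (act0 Gg)).
by [].
Qed.
Definition c := sH *+ (eA %/ k).
Lemma cA : c *+ n = 0.
Proof.
rewrite /c mulrnAC /sH -sumrMnl big1 ?mul0rn // => h _; exact: annA.
Qed.
Lemma chiA_H g : g \in H -> chiA g = c - act g c.
Proof.
move=> Hg; have Gg := subsetP sHG g Hg.
have e2 : chiA g = chiA g *+ eA by rewrite eA_on // /chiA annA.
rewrite e2 -(divnK k_eA) mulnC mulrnA.
by rewrite -(addrK (act g sH) (chiA g *+ k)) sH_eq // mulrnBl actMn.
Qed.

Definition psi g := chiA g + act g c - c.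
Lemma psi_H h : h \in H -> psi h = 0.
Proof. by move=> Hh; rewrite /psi chiA_H // subrK subrr. Qed.
Lemma cocpsi : is_cocycle G act psi.
Proof.
move=> x y Gx Gy; rewrite /psi cocA // actM // actB // actD //.
exact: idt.
Qed.
Lemma psi_n g : g \in G -> psi g *+ n = 0.
Proof.
by move=> Gg; rewrite /psi mulrnBl mulrnDl /chiA annA (act_ann Gg cA) cA addr0 subrr.
Qed.
Lemma chiA_N x : x \in N -> chiA x = chi x.
Proof. by move=> Nx; rewrite /chiA eA_on //; apply/eqP; rewrite -inN // (subsetP sNG). Qed.

Lemma injpsi : {in N &, injective psi}.
Proof.
move=> x1 x2 N1 N2 e.
have G1 := subsetP sNG x1 N1; have G2 := subsetP sNG x2 N2.
have [y Gy ey] := chi_surj c.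
apply: (mulIg y); apply: chi_inj; rewrite ?groupM //.
rewrite !cocG // ey; rewrite /psi !chiA_N // in e; exact: (addIr (- c) e).
Qed.

Lemma surjpsi a : a *+ n = 0 -> exists2 x, x \in N & psi x = a.
Proof.
move=> an; have [z Gz ez] := chi_surj (a + c); have [y Gy ey] := chi_surj c.
have Nz : z \in N by rewrite inN // ez mulrnDl an cA addr0.
have Ny : y \in N by rewrite inN // ey cA.
have Nx : (z * y^-1)%g \in N by rewrite groupM ?groupV.
exists (z * y^-1)%g => //.
have Gx := subsetP sNG _ Nx.
by apply: (addIr c); rewrite /psi chiA_N // subrK -ez -ey -cocG // mulgKV.
Qed.

Lemma psi_eqv h x : h \in H -> x \in N -> psi (x ^ h^-1)%g = act h (psi x).
Proof.
move=> Hh Nx; have Gh := subsetP sHG h Hh; have Gx := subsetP sNG x Nx.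
have Hh' : (h^-1)%g \in H by rewrite groupV.
have Gh' := subsetP sHG _ Hh'.
rewrite conjgE invgK cocpsi ?groupM // psi_H // add0r cocpsi // (psi_H Hh').
by rewrite act0 // addr0.
Qed.

Lemma EQ_NH : equivariant_IYB N H.
Proof.
exists (Ann M n), (@annact n), (annchi n psi); split.
- by rewrite NHG; apply: annmod.
- apply: anncoc sNG _ _; last by move=> g Ng; apply: psi_n; apply: (subsetP sNG).
  by move=> x y Nx Ny; apply: cocpsi; apply: (subsetP sNG).
- apply: annbij; [|exact: injpsi|exact: surjpsi].
  by move=> g Ng; apply: psi_n; apply: (subsetP sNG).
- move=> h x Hh Nx; apply: val_inj.
  have Gx := subsetP sNG x Nx; have Gh := subsetP sHG h Hh.
  rewrite val_annact // !val_annchi ?psi_n ?psi_eqv //.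
  by rewrite groupJ ?groupV.
Qed.

Lemma IYB_N : IYB N.
Proof.
exists (Ann M n), (@annact n), (annchi n psi); split.
- exact: is_module_sub (annmod n) sNG.
- apply: anncoc sNG _ _; last by move=> g Ng; apply: psi_n; apply: (subsetP sNG).
  by move=> x y Nx Ny; apply: cocpsi; apply: (subsetP sNG).
- apply: annbij; [|exact: injpsi|exact: surjpsi].
  by move=> g Ng; apply: psi_n; apply: (subsetP sNG).
Qed.

End Main.

Local Close Scope ring_scope.
Local Open Scope group_scope.
Theorem mainTheorem1 (gT : finGroupType) (G N H : {group gT}) :
  N ><| H = G -> Hall G N -> IYB G ->
  [/\ IYB H, IYB N & equivariant_IYB N H].
Proof.
move=> sdG hallN [M [act [chi [hm hc hb]]]].
split; [exact: (IYB_H sdG hallN hm hc hb) | exact: (IYB_N sdG hallN hm hc hb)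
       | exact: (EQ_NH sdG hallN hm hc hb)].
Qed.
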